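(* Let $p$ be a peak of a coherent tangent bundle $(\mathcal E,\langle\,,\rangle,D,\psi)$ on $M^2$, let $(U;u,v)$ be a $g$-coordinate system at $p$, and let $\gamma\colon[0,1)\to U$ be a $C^1$-regular curve with $\gamma(0)=p$ such that either (1) $\dot\gamma(0)$ is not a null vector (i.e. $\psi_p(\dot\gamma(0))\neq 0$), or (2) $\gamma$ is a singular curve (i.e. $\gamma([0,1))\subset\Sigma$). Then the limit $$\Psi_\gamma:=\lim_{t\to+0}\frac{\psi(\dot\gamma(t))}{|\psi(\dot\gamma(t))|}\in\mathcal E_p$$ exists.
   Context: A coherent tangent bundle over an oriented $2$-manifold $M^2$ is a tuple $(\mathcal E,\langle\,,\rangle,D,\psi)$ where $\mathcal E$ is an orientable rank-$2$ vector bundle over $M^2$ with a fiber metric $\langle\,,\rangle$ and a metric connection $D$, and $\psi\colon TM^2\to\mathcal E$ is a bundle homomorphism satisfying $D_X\psi(Y)-D_Y\psi(X)=\psi([X,Y])$. Fix a co-orientation $\mu$ (a section of $\mathcal E^*\wedge\mathcal E^*$ with $\mu(e_1,e_2)=\pm1$ on orthonormal frames). A point $p$ is singular if $\psi_p$ is not bijective; $\Sigma$ is the singular set; on a positively oriented chart $(u,v)$, $\lambda=\mu(\psi(\partial_u),\psi(\partial_v))$ and $\Sigma=\{\lambda=0\}$. A singular point is non-degenerate if $d\lambda\ne0$ there; then $\Sigma$ is locally a regular curve and the kernel of $\psi_p$ (the null direction) is one-dimensional. A non-degenerate singular point is an $A_2$-point if the null direction is transversal to the singular curve. A singular point $p$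 that is not an $A_2$-point is a peak if there is a coordinate neighborhood $U$ of $p$ such that (i) all singular points in $U\setminus\{p\}$ are $A_2$-points, (ii) $\operatorname{rank}\psi_p=1$, and (iii) $\Sigma\cap U$ consists of finitely many (possibly zero) $C^1$-regular curves starting from $p$. $g$-coordinate system: fix a Riemannian metric $g$ on $M^2$ and the $(1,1)$-tensor $I$ with $ds^2(X,Y)=g(IX,Y)$, where $ds^2=\psi^*\langle\,,\rangle$. Near a peak $p$, $I$ has two distinct eigenvalues $0\le\lambda_1<\lambda_2$; a $g$-coordinate system at $p$ is a chart $(U;u,v)$ around $p$ such that the $u$-curves are $\lambda_1$-eigendirections and the $v$-curves are $\lambda_2$-eigendirections of $I$ (so $\partial_u$ is the null direction at singular points and $\psi(\partial_v)\ne0$ at $p$). *)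

(* Defs.v *)
From Stdlib Require Import Reals List.
From Coquelicot Require Import Coquelicot.
Open Scope R_scope.

Definition pt := (R * R)%type.

Definition pu (f : pt -> R) (q : pt) : R := Derive (fun x => f (x, snd q)) (fst q).
Definition pv (f : pt -> R) (q : pt) : R := Derive (fun y => f (fst q, y)) (snd q).

Fixpoint Ck (n : nat) (U : pt -> Prop) (f : pt -> R) : Prop :=
  (forall q, U q -> continuous f q) /\
  match n with
  | O => True
  | S m =>
      (forall q, U q -> ex_derive (fun x => f (x, snd q)) (fst q)
                      /\ ex_derive (fun y => f (fst q, y)) (snd q))
      /\ Ck m U (pu f) /\ Ck m U (pv f)
  end.

Definition smooth_on (U : pt -> Prop) (f : pt -> R) : Prop := forall n, Ck n U f.
Definition vsmooth_on (U : pt -> Prop) (F : pt -> R * R) : Prop :=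
  smooth_on U (fun q => fst (F q)) /\ smooth_on U (fun q => snd (F q)).

Definition vpu (F : pt -> R * R) (q : pt) : R * R :=
  (pu (fun r => fst (F r)) q, pu (fun r => snd (F r)) q).
Definition vpv (F : pt -> R * R) (q : pt) : R * R :=
  (pv (fun r => fst (F r)) q, pv (fun r => snd (F r)) q).

Definition vadd (a b : R * R) : R * R := (fst a + fst b, snd a + snd b).
Definition vscal (k : R) (a : R * R) : R * R := (k * fst a, k * snd a).
Definition dot (a b : R * R) : R := fst a * fst b + snd a * snd b.
Definition det2 (a b : R * R) : R := fst a * snd b - snd a * fst b.
Definition Jrot (a : R * R) : R * R := (- snd a, fst a).
Definition vnorm (a : R * R) : R := sqrt (dot a a).
Definition normalize (a : R * R) : R * R := vscal (/ vnorm a) a.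

(* A coherent tangent bundle restricted to the chart U, written in a
   positively oriented orthonormal frame (e1,e2) of E over U:
   - fiber metric = standard dot product, co-orientation mu = det2;
   - metric connection D: D_X e1 = om(X) e2, D_X e2 = - om(X) e1, i.e.
     D_X s = X s + om(X) J s, with om(d_u) = om_u, om(d_v) = om_v;
   - psi_u = psi(d_u), psi_v = psi(d_v);
   - coherence D_X psi(Y) - D_Y psi(X) = psi([X,Y]) on coordinate fields. *)
Record CTB_chart (U : pt -> Prop) := {
  om_u : pt -> R;
  om_v : pt -> R;
  psi_u : pt -> R * R;
  psi_v : pt -> R * R;
  om_u_smooth : smooth_on U om_u;
  om_v_smooth : smooth_on U om_v;
  psi_u_smooth : vsmooth_on U psi_u;
  psi_v_smooth : vsmooth_on U psi_v;
  coherent : forall q, U q ->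
    vadd (vpu psi_v q) (vscal (om_u q) (Jrot (psi_v q)))
    = vadd (vpv psi_u q) (vscal (om_v q) (Jrot (psi_u q)))
}.

Arguments om_u {U}. Arguments om_v {U}.
Arguments psi_u {U}. Arguments psi_v {U}.

Section CTB.
Context {U : pt -> Prop} (C : CTB_chart U).

Definition psi_at (q : pt) (X : R * R) : R * R :=
  vadd (vscal (fst X) (psi_u C q)) (vscal (snd X) (psi_v C q)).

Definition lam (q : pt) : R := det2 (psi_u C q) (psi_v C q).

Definition singular (q : pt) : Prop := U q /\ lam q = 0.

Definition nondegenerate (q : pt) : Prop :=
  singular q /\ (pu lam q <> 0 \/ pv lam q <> 0).

Definition null_vector (q : pt) (eta : R * R) : Prop :=
  eta <> (0, 0) /\ psi_at q eta = (0, 0).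

(* A_2: non-degenerate, and the null direction is transversal to the
   singular curve {lam = 0}, whose tangent line is ker d lam *)
Definition A2_point (q : pt) : Prop :=
  nondegenerate q /\
  forall eta, null_vector q eta -> pu lam q * fst eta + pv lam q * snd eta <> 0.

Definition rank1 (q : pt) : Prop :=
  lam q = 0 /\ (psi_u C q <> (0, 0) \/ psi_v C q <> (0, 0)).
End CTB.

Definition C1_regular_curve (S : pt -> Prop) (c cd : R -> pt) : Prop :=
  (forall t, 0 <= t < 1 -> S (c t)) /\
  (forall t, 0 < t < 1 ->
     is_derive (fun s => fst (c s)) t (fst (cd t)) /\
     is_derive (fun s => snd (c s)) t (snd (cd t))) /\
  filterlim (fun h => (fst (c h) - fst (c 0)) / h) (at_right 0) (locally (fst (cd 0))) /\
  filterlim (fun h => (snd (c h) - snd (c 0)) / h) (at_right 0) (locally (snd (cd 0))) /\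
  (forall t, 0 <= t < 1 ->
     filterlim cd (within (fun s => 0 <= s < 1) (locally t)) (locally (cd t))) /\
  (forall t, 0 <= t < 1 -> cd t <> (0, 0)).

Definition peak {U : pt -> Prop} (C : CTB_chart U) (p : pt) : Prop :=
  singular C p /\ ~ A2_point C p /\
  exists V : pt -> Prop,
    open V /\ V p /\ (forall q, V q -> U q) /\
    (forall q, V q -> q <> p -> singular C q -> A2_point C q) /\
    rank1 C p /\
    exists cs : list ((R -> pt) * (R -> pt)),
      (forall c, In c cs -> C1_regular_curve V (fst c) (snd c) /\ fst c 0 = p) /\
      (forall q, V q ->
         (singular C q <->
          (q = p \/ exists c, In c cs /\ exists t, 0 <= t < 1 /\ fst c t = q))).

Definition riemannian_metric (U : pt -> Prop) (g11 g12 g22 : pt -> R) : Prop :=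
  smooth_on U g11 /\ smooth_on U g12 /\ smooth_on U g22 /\
  forall q, U q -> 0 < g11 q /\ 0 < g11 q * g22 q - g12 q * g12 q.

(* (U;u,v) is a g-coordinate system: with ds^2 = psi^* <,> and
   ds^2(X,Y) = g(I X, Y), one has I d_u = l1 d_u, I d_v = l2 d_v, l1 < l2. *)
Definition g_coordinate_system {U : pt -> Prop} (C : CTB_chart U)
    (g11 g12 g22 : pt -> R) : Prop :=
  exists l1 l2 : pt -> R, forall q, U q ->
    0 <= l1 q < l2 q /\
    dot (psi_u C q) (psi_u C q) = l1 q * g11 q /\
    dot (psi_u C q) (psi_v C q) = l1 q * g12 q /\
    dot (psi_v C q) (psi_u C q) = l2 q * g12 q /\
    dot (psi_v C q) (psi_v C q) = l2 q * g22 q.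

(* Main.v *)
Require Import Defs.
From Stdlib Require Import Reals Lra Psatz.
From Coquelicot Require Import Coquelicot.
Open Scope R_scope.

Lemma ballR (a e x : R) : ball a e x <-> Rabs (x - a) < e.
Proof. unfold ball; simpl; unfold AbsRing_ball, abs, minus, plus, opp; simpl. tauto. Qed.

Section G.
Context {T : Type} {F : (T -> Prop) -> Prop} {FF : Filter F}.

Lemma lim_fst (h : T -> R*R) w : filterlim h F (locally w) -> filterlim (fun t => fst (h t)) F (locally (fst w)).
Proof. intros H P [e HP]. apply (H (fun z => P (fst z))). exists e. intros [x y] [Hx Hy]. apply HP. exact Hx. Qed.
Lemma lim_snd (h : T -> R*R) w : filterlim h F (locally w) -> filterlim (fun t => snd (h t)) F (locally (snd w)).
Proof. intros H P [e HP]. apply (H (fun z => P (snd z))). exists e. intros [x y] [Hx Hy]. apply HP. exact Hy. Qed.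

Lemma lim_pt (h : T -> R*R) w : filterlim (fun t => fst (h t)) F (locally (fst w)) ->
  filterlim (fun t => snd (h t)) F (locally (snd w)) -> filterlim h F (locally w).
Proof.
  intros Hf Hg P [e HP]. unfold filtermap.
  apply (filter_imp (fun t => ball (fst w) e (fst (h t)) /\ ball (snd w) e (snd (h t)))).
  - intros t [h1 h2]. apply HP. destruct w, (h t). split; assumption.
  - apply filter_and; [apply (Hf (ball (fst w) e)) | apply (Hg (ball (snd w) e))]; exists e; auto.
Qed.

Lemma lim_plus (f g : T -> R) a b : filterlim f F (locally a) -> filterlim g F (locally b) ->
  filterlim (fun t => f t + g t) F (locally (a + b)).
Proof. intros Hf Hg. exact (filterlim_comp_2 f g Rplus Hf Hg (@filterlim_plus _ R_NormedModule a b)). Qed.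
Lemma lim_mult (f g : T -> R) a b : filterlim f F (locally a) -> filterlim g F (locally b) ->
  filterlim (fun t => f t * g t) F (locally (a * b)).
Proof. intros Hf Hg. exact (filterlim_comp_2 f g Rmult Hf Hg (@filterlim_mult R_AbsRing a b)). Qed.
Lemma lim_cont (f : T -> R) (g : R -> R) a : filterlim f F (locally a) -> continuous g a ->
  filterlim (fun t => g (f t)) F (locally (g a)).
Proof. intros Hf Hg. exact (filterlim_comp _ _ _ f g F _ _ Hf Hg). Qed.

Lemma lim_normalize (h : T -> R*R) w : w <> (0,0) -> filterlim h F (locally w) ->
  filterlim (fun t => normalize (h t)) F (locally (normalize w)).
Proof.
  intros Hw H.
  assert (H1 := lim_fst h w H). assert (H2 := lim_snd h w H).
  assert (Hpos : 0 < sqrt (dot w w)).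
  { apply sqrt_lt_R0. destruct w as [a b]; unfold dot; simpl.
    destruct (Req_dec a 0); destruct (Req_dec b 0); subst; try (exfalso; apply Hw; reflexivity); nra. }
  assert (Hn : filterlim (fun t => / vnorm (h t)) F (locally (/ vnorm w))).
  { unfold vnorm. apply (lim_cont _ (fun x => / x)).
    apply (lim_cont _ sqrt). unfold dot. apply lim_plus; apply lim_mult; assumption.
    apply continuous_sqrt. apply continuous_Rinv. lra. }
  unfold normalize, vscal. apply lim_pt; simpl; apply lim_mult; assumption.
Qed.

Lemma lim_smooth (f : pt -> R) (U : pt -> Prop) (h : T -> pt) w : smooth_on U f -> U w ->
  filterlim h F (locally w) -> filterlim (fun t => f (h t)) F (locally (f w)).
Proof. intros Hs Uw H. destruct (Hs 0%nat) as [Hc _]. exact (filterlim_comp _ _ _ h f F _ _ H (Hc w Uw)). Qed.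
End G.

Lemma at_right_ex (P : R -> Prop) : at_right 0 P -> exists d, 0 < d /\ forall t, 0 < t < d -> P t.
Proof.
  intros [e He]. exists e. split; [apply cond_pos|]. intros t [h1 h2]. apply He; [|exact h1].
  apply ballR. rewrite Rminus_0_r, Rabs_right; lra.
Qed.

Lemma at_right_lt1 : at_right 0 (fun t => t < 1).
Proof. exists (mkposreal 1 Rlt_0_1). intros y Hy _. apply ballR in Hy. simpl in Hy.
  apply Rabs_def2 in Hy. unfold minus, plus, opp in Hy; simpl in Hy. lra. Qed.

Lemma lim_id0 : filterlim (fun h : R => h) (at_right 0) (locally 0).
Proof. intros P [e HP]. exists e. intros y Hy _. apply HP, Hy. Qed.

Lemma loc_open01 t : 0 < t < 1 -> locally t (fun x => 0 < x < 1).
Proof. intros Ht. apply (open_and (fun x => 0 < x) (fun x => x < 1)); [apply open_gt|apply open_lt|exact Ht]. Qed.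

Lemma curve_cont0 S gam gamd : C1_regular_curve S gam gamd ->
  filterlim gam (at_right 0) (locally (gam 0)).
Proof.
  intros [_ [_ [Hq1 [Hq2 _]]]]. apply lim_pt.
  - assert (H := lim_plus (fun _ => fst (gam 0)) (fun h => h * ((fst (gam h) - fst (gam 0)) / h)) _ _
        (filterlim_const _) (lim_mult _ _ _ _ lim_id0 Hq1)).
    rewrite Rmult_0_l, Rplus_0_r in H. revert H. apply filterlim_ext_loc.
    exists (mkposreal 1 Rlt_0_1). intros y _ Hy. simpl. field. lra.
  - assert (H := lim_plus (fun _ => snd (gam 0)) (fun h => h * ((snd (gam h) - snd (gam 0)) / h)) _ _
        (filterlim_const _) (lim_mult _ _ _ _ lim_id0 Hq2)).
    rewrite Rmult_0_l, Rplus_0_r in H. revert H. apply filterlim_ext_loc.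
    exists (mkposreal 1 Rlt_0_1). intros y _ Hy. simpl. field. lra.
Qed.

Lemma curve_d0 S gam gamd : C1_regular_curve S gam gamd ->
  filterlim gamd (at_right 0) (locally (gamd 0)).
Proof.
  intros [_ [_ [_ [_ [Hw _]]]]] P HP.
  specialize (Hw 0 (conj (Rle_refl 0) Rlt_0_1) P HP). unfold filtermap, within in *.
  generalize (filter_and _ _ Hw at_right_lt1). unfold at_right, within.
  apply filter_imp. intros x [h1 h2] hx. apply h1. split; [lra|]. apply h2, hx.
Qed.

Lemma gamd_cont S gam gamd t : C1_regular_curve S gam gamd -> 0 < t < 1 ->
  continuity_pt (fun s => snd (gamd s)) t.
Proof.
  intros [_ [_ [_ [_ [Hw _]]]]] Ht. apply continuity_pt_filterlim.
  apply (lim_snd gamd). intros P HP.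
  specialize (Hw t (conj (Rlt_le _ _ (proj1 Ht)) (proj2 Ht)) P HP). unfold filtermap, within in *.
  generalize (filter_and _ _ Hw (loc_open01 t Ht)). apply filter_imp.
  intros x [h1 h2]. apply h1. lra.
Qed.

Lemma pu_zero_along (U : pt -> Prop) (f : pt -> R) (gam gamd : R -> pt) t :
  open U -> Ck 1 U f -> 0 < t < 1 -> U (gam t) ->
  (forall s, 0 < s < 1 -> f (gam s) = 0) ->
  is_derive (fun s => fst (gam s)) t (fst (gamd t)) ->
  is_derive (fun s => snd (gam s)) t (snd (gamd t)) ->
  pu f (gam t) * fst (gamd t) + pv f (gam t) * snd (gamd t) = 0.
Proof.
  intros HU Hck Ht Ut H0 Hd1 Hd2.
  destruct Hck as [_ [Hex [Hpu _]]].
  set (q := gam t) in *.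
  assert (Hd : differentiable_pt_lim (fun x y => f (x, y)) (fst q) (snd q) (pu f q) (pv f q)).
  { apply filterdiff_differentiable_pt_lim.
    assert (E : pu f q = (fun a b => pu f (a, b)) (fst q) (snd q)) by (destruct q; reflexivity).
    rewrite E.
    eapply filterdiff_ext_lin.
    apply (is_derive_filterdiff (fun x y => f (x, y)) (fst q) (snd q) (fun a b => pu f (a, b)) (pv f q)).
    - rewrite <- surjective_pairing. generalize (HU q Ut). apply filter_imp.
      intros [a b] Hab. simpl. apply Derive_correct. exact (proj1 (Hex _ Hab)).
    - unfold pv. apply Derive_correct. exact (proj2 (Hex _ Ut)).
    - rewrite <- surjective_pairing. destruct Hpu as [Hc _].
      apply (continuous_ext (pu f)). intros [a b]; reflexivity. apply Hc, Ut.
    - intros y. reflexivity. }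
  assert (Hc := derivable_pt_lim_comp_2d _ _ _ _ _ _ _ _ Hd (proj1 (is_derive_Reals _ _ _) Hd1) (proj1 (is_derive_Reals _ _ _) Hd2)).
  apply is_derive_Reals in Hc. apply is_derive_unique in Hc.
  rewrite <- Hc. apply is_derive_unique.
  apply (is_derive_ext_loc (fun _ => 0)).
  - generalize (loc_open01 t Ht). apply filter_imp. intros s Hs. simpl.
    rewrite <- surjective_pairing. symmetry. apply H0, Hs.
  - apply (is_derive_const 0).
Qed.

Lemma sign_const (f : R -> R) a c : (forall x, a < x < c -> continuity_pt f x) ->
  (forall x, a < x < c -> f x <> 0) -> forall x y, a < x < c -> a < y < c -> 0 < f x * f y.
Proof.
  intros Hc Hn.
  assert (K : forall x y, a < x < c -> a < y < c -> x < y -> 0 < f x * f y).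
  { intros x y Hx Hy Hxy.
    assert (fx := Hn x Hx). assert (fy := Hn y Hy).
    destruct (Rtotal_order (f x) 0) as [h1|[h1|h1]]; [|contradiction|];
    destruct (Rtotal_order (f y) 0) as [h2|[h2|h2]]; try contradiction; try nra.
    - assert (Hc' : forall s, x <= s <= y -> continuity_pt f s).
      { intros s Hs. apply Hc. lra. }
      destruct (Ranalysis5.IVT_interv f x y Hc' Hxy) as [z [Hz Hfz]].
      { cbv beta; lra. } { cbv beta; lra. }
      exfalso. apply (Hn z). lra. lra.
    - assert (Hc' : forall s, x <= s <= y -> continuity_pt (fun s => - f s) s).
      { intros s Hs. apply continuity_pt_opp, Hc. lra. }
      destruct (Ranalysis5.IVT_interv (fun s => - f s) x y Hc' Hxy) as [z [Hz Hfz]].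
      { cbv beta; lra. } { cbv beta; lra. }
      exfalso. apply (Hn z). lra. lra. }
  intros x y Hx Hy. destruct (Rtotal_order x y) as [h|[h|h]].
  - apply K; auto.
  - subst. assert (fx := Hn y Hy). nra.
  - rewrite Rmult_comm. apply K; auto.
Qed.

Lemma normalize_scal b w : b <> 0 -> normalize (vscal b w) = vscal (b / Rabs b) (normalize w).
Proof.
  intros Hb. unfold normalize, vnorm, vscal, dot. destruct w as [w1 w2]; simpl.
  assert (E : b * w1 * (b * w1) + b * w2 * (b * w2) = (b * b) * (w1 * w1 + w2 * w2)) by ring.
  rewrite E, sqrt_mult by nra.
  assert (E2 : sqrt (b * b) = Rabs b) by (rewrite <- sqrt_Rsqr_abs; reflexivity).
  rewrite E2. assert (Ha : Rabs b <> 0) by (apply Rabs_no_R0; auto).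
  destruct (Req_dec (sqrt (w1 * w1 + w2 * w2)) 0) as [Z|Z].
  - rewrite Z, Rmult_0_r, Rinv_0. f_equal; ring.
  - f_equal; field; auto.
Qed.

Lemma gcoord_facts U (C : CTB_chart U) g11 g12 g22 :
  riemannian_metric U g11 g12 g22 -> g_coordinate_system C g11 g12 g22 ->
  forall q, U q -> psi_v C q <> (0,0) /\ dot (psi_u C q) (psi_v C q) = 0.
Proof.
  intros [_ [_ [_ Hpos]]] [l1 [l2 Hl]] q Uq.
  destruct (Hl q Uq) as [[h0 h1] [e1 [e2 [e3 e4]]]]. destruct (Hpos q Uq) as [p1 p2].
  assert (Ec : dot (psi_v C q) (psi_u C q) = dot (psi_u C q) (psi_v C q)) by (unfold dot; ring).
  assert (G : g12 q = 0).
  { assert (l1 q * g12 q = l2 q * g12 q) by congruence.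
    assert ((l2 q - l1 q) * g12 q = 0) by lra.
    destruct (Rmult_integral _ _ H0); lra. }
  split.
  - intro Z. rewrite Z in e4. unfold dot in e4; simpl in e4.
    rewrite G in p2. assert (0 < g22 q) by nra. nra.
  - rewrite e2, G. ring.
Qed.

Lemma sing_psiu0 (u v : R * R) : dot u v = 0 -> v <> (0,0) -> det2 u v = 0 -> u = (0,0).
Proof.
  destruct u as [u1 u2], v as [v1 v2]. unfold dot, det2; simpl. intros H1 Hv H2.
  assert (Hp : 0 < v1 * v1 + v2 * v2).
  { destruct (Req_dec v1 0); destruct (Req_dec v2 0); subst; try (exfalso; apply Hv; reflexivity); nra. }
  assert (E : (u1 * u1 + u2 * u2) * (v1 * v1 + v2 * v2) = 0).
  { replace ((u1 * u1 + u2 * u2) * (v1 * v1 + v2 * v2)) with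
      ((u1 * v2 - u2 * v1) ^ 2 + (u1 * v1 + u2 * v2) ^ 2) by ring.
    rewrite H1, H2. ring. }
  destruct (Rmult_integral _ _ E) as [E1|E1]; [|lra].
  f_equal; nra.
Qed.

Lemma pu_lam_zero U (C : CTB_chart U) q : U q -> psi_u C q = (0,0) ->
  pu (fun r => fst (psi_u C r)) q = 0 -> pu (fun r => snd (psi_u C r)) q = 0 -> pu (lam C) q = 0.
Proof.
  intros Uq Hq H1 H2.
  assert (A1 := proj1 (proj1 (proj2 (proj1 (psi_u_smooth U C) 1%nat)) q Uq)).
  assert (A2 := proj1 (proj1 (proj2 (proj2 (psi_u_smooth U C) 1%nat)) q Uq)).
  assert (A3 := proj1 (proj1 (proj2 (proj1 (psi_v_smooth U C) 1%nat)) q Uq)).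
  assert (A4 := proj1 (proj1 (proj2 (proj2 (psi_v_smooth U C) 1%nat)) q Uq)).
  unfold pu, lam, det2 in *. simpl in *.
  rewrite Derive_minus by (apply ex_derive_mult; assumption).
  rewrite !Derive_mult by assumption.
  rewrite H1, H2. rewrite <- surjective_pairing, Hq. simpl. ring.
Qed.

Lemma loc_neq (a : R) : a <> 0 -> locally a (fun x => x <> 0).
Proof.
  intros Ha. exists (mkposreal (Rabs a) (Rabs_pos_lt a Ha)). intros x Hx Hx0.
  subst x. assert (K := proj1 (ballR _ _ _) Hx). simpl in K. rewrite Rminus_0_l, Rabs_Ropp in K. lra.
Qed.

Lemma ev_nonzero {T} {F : (T -> Prop) -> Prop} {FF : Filter F} (h : T -> R * R) w :
  filterlim h F (locally w) -> w <> (0,0) -> F (fun t => h t <> (0,0)).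
Proof.
  intros H Hw. destruct w as [a b].
  destruct (Req_dec a 0) as [Ha|Ha].
  - destruct (Req_dec b 0) as [Hb|Hb]. { subst; contradiction. }
    apply (filter_imp (fun t => snd (h t) <> 0)).
    + intros t Ht E. rewrite E in Ht. apply Ht. reflexivity.
    + exact (lim_snd h (a, b) H _ (loc_neq b Hb)).
  - apply (filter_imp (fun t => fst (h t) <> 0)).
    + intros t Ht E. rewrite E in Ht. apply Ht. reflexivity.
    + exact (lim_fst h (a, b) H _ (loc_neq a Ha)).
Qed.

Lemma sgn_eq x y : 0 < x * y -> x / Rabs x = y / Rabs y.
Proof.
  intros H. destruct (Rlt_le_dec 0 x).
  - assert (0 < y) by nra. rewrite !Rabs_right by lra. field; lra.
  - assert (x <> 0) by (intro E; subst; lra). assert (x < 0) by lra. assert (y < 0) by nra. rewrite !Rabs_left by lra. field; lra.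
Qed.

Theorem mainTheorem2 (U : pt -> Prop) (C : CTB_chart U)
    (g11 g12 g22 : pt -> R) (p : pt) (gam gamd : R -> pt) :
  open U ->
  riemannian_metric U g11 g12 g22 ->
  peak C p ->
  g_coordinate_system C g11 g12 g22 ->
  C1_regular_curve U gam gamd ->
  gam 0 = p ->
  (psi_at C p (gamd 0) <> (0, 0) \/ (forall t, 0 <= t < 1 -> singular C (gam t))) ->
  (exists eps, 0 < eps /\ forall t, 0 < t < eps -> psi_at C (gam t) (gamd t) <> (0, 0)) /\
  exists L : R * R,
    filterlim (fun t => normalize (psi_at C (gam t) (gamd t))) (at_right 0) (locally L).
Proof.
  intros HU Hr Hpk Hg Hcur Hg0 Hcase.
  assert (Up : U p) by (rewrite <- Hg0; apply (proj1 Hcur); lra).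
  assert (Hf := gcoord_facts U C g11 g12 g22 Hr Hg).
  assert (Hgam : filterlim gam (at_right 0) (locally p)) by (rewrite <- Hg0; exact (curve_cont0 _ _ _ Hcur)).
  assert (Hgd := curve_d0 _ _ _ Hcur).
  assert (Hpv : filterlim (fun t => psi_v C (gam t)) (at_right 0) (locally (psi_v C p))).
  { apply lim_pt.
    - exact (lim_smooth (fun r => fst (psi_v C r)) U gam p (proj1 (psi_v_smooth U C)) Up Hgam).
    - exact (lim_smooth (fun r => snd (psi_v C r)) U gam p (proj2 (psi_v_smooth U C)) Up Hgam). }
  destruct Hcase as [Hnz | Hsing].
  - assert (Hlim : filterlim (fun t => psi_at C (gam t) (gamd t)) (at_right 0) (locally (psi_at C p (gamd 0)))).
    { unfold psi_at, vadd, vscal. apply lim_pt; simpl; apply lim_plus; apply lim_mult.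
      - exact (lim_fst gamd _ Hgd).
      - exact (lim_smooth (fun r => fst (psi_u C r)) U gam p (proj1 (psi_u_smooth U C)) Up Hgam).
      - exact (lim_snd gamd _ Hgd).
      - exact (lim_fst _ _ Hpv).
      - exact (lim_fst gamd _ Hgd).
      - exact (lim_smooth (fun r => snd (psi_u C r)) U gam p (proj2 (psi_u_smooth U C)) Up Hgam).
      - exact (lim_snd gamd _ Hgd).
      - exact (lim_snd _ _ Hpv). }
    split.
    + destruct (at_right_ex _ (ev_nonzero _ _ Hlim Hnz)) as [d [hd Hd]]. exists d. auto.
    + exists (normalize (psi_at C p (gamd 0))). apply lim_normalize; auto.
  - destruct Hpk as [_ [_ [V [HV [Vp [VU [HA2 _]]]]]]].
    assert (Hu0 : forall t, 0 <= t < 1 -> psi_u C (gam t) = (0,0)).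
    { intros t Ht. destruct (Hsing t Ht) as [Ut Hl].
      destruct (Hf _ Ut) as [h1 h2]. apply (sing_psiu0 _ (psi_v C (gam t))); auto. }
    assert (Hpsi : forall t, 0 <= t < 1 -> psi_at C (gam t) (gamd t) = vscal (snd (gamd t)) (psi_v C (gam t))).
    { intros t Ht. unfold psi_at. rewrite (Hu0 t Ht). unfold vadd, vscal; simpl. f_equal; ring. }
    pose proof Hcur as Hcur0. destruct Hcur as [HcU [Hder [Hq1 [Hq2 [_ Hnz0]]]]].
    assert (Hneq : at_right 0 (fun t => gam t <> p)).
    { assert (Hd0 := Hnz0 0 (conj (Rle_refl 0) Rlt_0_1)).
      destruct (Req_dec (fst (gamd 0)) 0) as [Ha|Ha].
      - assert (Hb : snd (gamd 0) <> 0).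
        { intro Hb. apply Hd0. destruct (gamd 0); simpl in *; subst; reflexivity. }
        generalize (Hq2 _ (loc_neq _ Hb)). unfold filtermap. apply filter_imp.
        intros t Ht E. apply Ht. rewrite E, Hg0. unfold Rdiv. rewrite Rminus_eq_0. apply Rmult_0_l.
      - generalize (Hq1 _ (loc_neq _ Ha)). unfold filtermap. apply filter_imp.
        intros t Ht E. apply Ht. rewrite E, Hg0. unfold Rdiv. rewrite Rminus_eq_0. apply Rmult_0_l. }
    assert (HVe : at_right 0 (fun t => V (gam t))) by exact (Hgam V (HV p Vp)).
    destruct (at_right_ex _ (filter_and _ _ at_right_lt1 (filter_and _ _ HVe Hneq))) as [d [hd Hd]].
    assert (Key : forall t, 0 < t < d -> snd (gamd t) <> 0).
    { intros t Ht Hb0. destruct (Hd t Ht) as [t1 [Vt npt]].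
      assert (Ht' : 0 < t < 1) by lra.
      assert (Ut : U (gam t)) by (apply VU; exact Vt).
      assert (Hq0 := Hu0 t (conj (Rlt_le _ _ (proj1 Ht')) t1)).
      destruct (HA2 (gam t) Vt npt (Hsing t (conj (Rlt_le _ _ (proj1 Ht')) t1))) as [_ Hnull].
      specialize (Hnull (1, 0)). simpl in Hnull.
      assert (Ha : fst (gamd t) <> 0).
      { intro Ha. apply (Hnz0 t (conj (Rlt_le _ _ (proj1 Ht')) t1)).
        destruct (gamd t); simpl in *; subst; reflexivity. }
      destruct (Hder t Ht') as [Hd1 Hd2].
      assert (Z1 : pu (fun r => fst (psi_u C r)) (gam t) = 0).
      { assert (K := pu_zero_along U (fun r => fst (psi_u C r)) gam gamd t HU
          (proj1 (psi_u_smooth U C) 1%nat) Ht' Ut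
          (fun s Hs => f_equal fst (Hu0 s (conj (Rlt_le _ _ (proj1 Hs)) (proj2 Hs)))) Hd1 Hd2).
        rewrite Hb0, Rmult_0_r, Rplus_0_r in K.
        destruct (Rmult_integral _ _ K); [assumption | contradiction]. }
      assert (Z2 : pu (fun r => snd (psi_u C r)) (gam t) = 0).
      { assert (K := pu_zero_along U (fun r => snd (psi_u C r)) gam gamd t HU
          (proj2 (psi_u_smooth U C) 1%nat) Ht' Ut
          (fun s Hs => f_equal snd (Hu0 s (conj (Rlt_le _ _ (proj1 Hs)) (proj2 Hs)))) Hd1 Hd2).
        rewrite Hb0, Rmult_0_r, Rplus_0_r in K.
        destruct (Rmult_integral _ _ K); [assumption | contradiction]. }
      assert (Z := pu_lam_zero U C (gam t) Ut Hq0 Z1 Z2).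
      apply Hnull.
      + split. intro E; injection E; lra.
        unfold psi_at. rewrite Hq0. unfold vadd, vscal; simpl. f_equal; ring.
      + rewrite Z. ring. }
    assert (Hcont : forall x, 0 < x < d -> continuity_pt (fun s => snd (gamd s)) x).
    { intros x Hx. apply (gamd_cont U gam gamd x Hcur0).
      destruct (Hd x Hx); lra. }
    assert (Hsg := sign_const (fun s => snd (gamd s)) 0 d Hcont Key).
    assert (Hd2 : 0 < d / 2 < d) by lra.
    assert (Hnv : forall t, 0 < t < d -> psi_v C (gam t) <> (0,0)).
    { intros t Ht. destruct (Hd t Ht) as [t1 [Vt _]]. apply (Hf _ (VU _ Vt)). }
    split.
    + exists d. split; [exact hd|]. intros t Ht E.
      destruct (Hd t Ht) as [t1 _].
      rewrite (Hpsi t (conj (Rlt_le _ _ (proj1 Ht)) t1)) in E.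
      apply (Hnv t Ht). unfold vscal in E. injection E. intros E2 E1.
      assert (Kb := Key t Ht).
      destruct (Rmult_integral _ _ E1); [contradiction|].
      destruct (Rmult_integral _ _ E2); [contradiction|].
      destruct (psi_v C (gam t)); simpl in *; subst; reflexivity.
    + set (s0 := snd (gamd (d / 2)) / Rabs (snd (gamd (d / 2)))).
      exists (vscal s0 (normalize (psi_v C p))).
      apply (filterlim_ext_loc (fun t => vscal s0 (normalize (psi_v C (gam t))))).
      * exists (mkposreal d hd). intros y Hy ypos.
        assert (Ky := proj1 (ballR _ _ _) Hy). simpl in Ky.
        rewrite Rminus_0_r, Rabs_right in Ky by lra.
        assert (Hy' : 0 < y < d) by lra.
        destruct (Hd y Hy') as [t1 _].
        rewrite (Hpsi y (conj (Rlt_le _ _ ypos) t1)), normalize_scal by exact (Key y Hy').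
        unfold s0. rewrite (sgn_eq _ _ (Hsg y (d/2) Hy' Hd2)). reflexivity.
      * assert (Hn := lim_normalize _ _ (proj1 (Hf _ Up)) Hpv).
        unfold vscal. apply lim_pt; simpl; apply lim_mult.
        -- apply filterlim_const.
        -- exact (lim_fst _ _ Hn).
        -- apply filterlim_const.
        -- exact (lim_snd _ _ Hn).
Qed.
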